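(* Let $G$ be a graph with a type-2A 1-planar drawing $D$, and let $G'$ be the graph obtained from $G$ by removing one edge from each pair of crossing edges of $D$. If $G$ is connected and $D$ is nice, then $G'$ is a connected, spanning, planar subgraph of $G$.
   Context: All drawings are good (no edge crosses itself, two edges cross at most once, adjacent edges do not cross). A drawing is 1-planar if every edge is crossed at most once. If edges $ab$ and $cd$ cross in a 1-planar drawing of $G$, the associated edges of this crossing are the edges of $G[\{a,b,c,d\}]$ other than $ab$ and $cd$. A 1-planar drawing is type-2A if every crossing has at least two associated edges, and every crossing with exactly two associated edges has these two edges disjoint. A 1-planar drawing is nice if for every pair of crossing edges, all of their associated edges are uncrossed. *)

(* Defs.v *)
From HB Require Import structures.
From mathcomp Require Import all_boot all_order all_algebra.
From mathcomp Require Import all_classical all_reals all_analysis.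
Set Implicit Arguments. Unset Strict Implicit. Unset Printing Implicit Defensive.
Import Order.TTheory GRing.Theory Num.Theory.
Import numFieldNormedType.Exports.
Local Open Scope ring_scope.

Section Drawings.
Variables (R : realType) (T : finType).

(* A (finite simple) graph on vertex set T is given by a symmetric irreflexive
   adjacency relation; its edges are the 2-element vertex sets {u,v} with adj u v. *)
Definition is_edge (adj : rel T) (e : {set T}) : bool :=
  [exists u, exists v, adj u v && (e == [set u; v])].

Definition drawing (adj : rel T) (pos : T -> R * R) (arc : {set T} -> R -> R * R) : Prop :=
  injective pos /\
  forall e, is_edge adj e ->
    {within [set t : R | (0 <= t <= 1)%R], continuous (arc e)}%classic /\
    (forall s t : R, 0 <= s <= 1 -> 0 <= t <= 1 -> arc e s = arc e t -> s = t) /\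
    (exists u v, e = [set u; v] /\ arc e 0 = pos u /\ arc e 1 = pos v) /\
    (forall (t : R) (w : T), 0 < t < 1 -> arc e t <> pos w).

Definition cross (adj : rel T) (arc : {set T} -> R -> R * R) (e f : {set T}) : Prop :=
  is_edge adj e /\ is_edge adj f /\ e <> f /\
  exists s t : R, 0 < s < 1 /\ 0 < t < 1 /\ arc e s = arc f t.

(* Good drawing: a drawing (arcs are simple, i.e. no edge crosses itself) in which
   adjacent edges do not cross and two edges cross at most once. *)
Definition good_drawing (adj : rel T) pos arc : Prop :=
  drawing adj pos arc /\
  (forall e f, cross adj arc e f -> [disjoint e & f]) /\
  (forall e f, is_edge adj e -> is_edge adj f -> e <> f ->
     forall s t s' t' : R, 0 < s < 1 -> 0 < t < 1 -> 0 < s' < 1 -> 0 < t' < 1 ->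
       arc e s = arc f t -> arc e s' = arc f t' -> s = s').

Definition one_planar (adj : rel T) arc : Prop :=
  forall e f g, cross adj arc e f -> cross adj arc e g -> f = g.

Definition assoc (adj : rel T) (e f : {set T}) : {set {set T}} :=
  [set x | is_edge adj x && (x \subset e :|: f) && (x != e) && (x != f)].

Definition type2A (adj : rel T) arc : Prop :=
  forall e f, cross adj arc e f ->
    (2 <= #|assoc adj e f|)%N /\
    (#|assoc adj e f| = 2%N ->
       forall x y, x \in assoc adj e f -> y \in assoc adj e f -> x != y -> [disjoint x & y]).

Definition nice (adj : rel T) arc : Prop :=
  forall e f, cross adj arc e f ->
    forall x, x \in assoc adj e f -> forall g, ~ cross adj arc x g.

Definition removal_set (adj : rel T) arc (Rm : {set {set T}}) : Prop :=
  (forall e, e \in Rm -> exists f, cross adj arc e f) /\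
  (forall e f, cross adj arc e f -> (e \in Rm) != (f \in Rm)).

Definition delete_edges (adj : rel T) (Rm : {set {set T}}) : rel T :=
  [rel u v | adj u v && ([set u; v] \notin Rm)].

Definition connected_graph (adj : rel T) : Prop := forall u v, connect adj u v.

Definition planar (adj : rel T) : Prop :=
  exists (pos : T -> R * R) (arc : {set T} -> R -> R * R),
    drawing adj pos arc /\ forall e f, ~ cross adj arc e f.

End Drawings.

(* Main.v *)
Require Import Defs.
From HB Require Import structures.
From mathcomp Require Import all_boot all_order all_algebra.
From mathcomp Require Import all_classical all_reals all_analysis.

Section Aux.
Variables (T : finType) (adj : rel T) (Rm : {set {set T}}).
Hypotheses (adjS : symmetric adj) (adjI : irreflexive adj).

Let G' := delete_edges adj Rm.

Lemma G'S : symmetric G'.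
Proof. by move=> u v; rewrite /G' /delete_edges /= adjS finset.setUC. Qed.

Lemma G'edge u v : adj u v -> [set u; v] \notin Rm -> connect G' u v.
Proof. move=> a n; apply: connect1; rewrite /G' /delete_edges /=; by apply/andP. Qed.

Lemma key z w c d g :
  g \in assoc adj [set z; w] [set c; d] -> adj c d -> [set c; d] \notin Rm ->
  g \notin Rm ->
  connect G' z c \/ g \in [set [set w; c]; [set w; d]].
Proof.
move=> ga acd ncd ng.
have cdc : connect G' d c by rewrite (sym_connect_sym G'S); exact: G'edge.
move: ga; rewrite inE => /andP[/andP[/andP[ge gs] gne] gnf].
move: ge => /existsP[u /existsP[v /andP[auv /eqP gE]]].
subst g.
have cuv : connect G' u v by exact: G'edge.
have cvu : connect G' v u by rewrite (sym_connect_sym G'S).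
have uin := fintype.subsetP gs u (set21 u v).
have vin := fintype.subsetP gs v (set22 u v).
move: uin vin; rewrite !inE -!orbA.
have nuu : forall x, adj x x = false by move=> x; exact: adjI.
case/or4P=> /eqP Hu; case/or4P=> /eqP Hv; subst u v; idtac;
  rewrite ?nuu // in auv;
  try (by move: gne; rewrite eqxx);
  try (by move: gne; rewrite finset.setUC eqxx);
  try (by move: gnf; rewrite eqxx);
  try (by move: gnf; rewrite finset.setUC eqxx);
  try (by left);
  try (by left; apply: connect_trans cdc);
  try (by left; rewrite (sym_connect_sym G'S));
  try (by left; rewrite (sym_connect_sym G'S) in cdc; apply: connect_trans cdc; rewrite (sym_connect_sym G'S));
  try (by right; rewrite !inE eqxx ?orbT);
  try (by right; rewrite !inE finset.setUC eqxx ?orbT).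
all: right; apply/orP; first [by left | by right | by left; rewrite finset.setUC | by right; rewrite finset.setUC].
Qed.

Lemma edgeG' e : is_edge (delete_edges adj Rm) e -> is_edge adj e /\ e \notin Rm.
Proof.
move=> /existsP[u /existsP[v /andP[/andP[a n] /eqP E]]]; subst e; split => //.
by apply/existsP; exists u; apply/existsP; exists v; rewrite a eqxx.
Qed.

Lemma side z w c d :
  adj c d -> [set c; d] \notin Rm ->
  (forall g, g \in assoc adj [set z; w] [set c; d] -> g \notin Rm) ->
  (2 <= #|assoc adj [set z; w] [set c; d]|)%N ->
  (#|assoc adj [set z; w] [set c; d]| = 2%N ->
     forall x y, x \in assoc adj [set z; w] [set c; d] ->
       y \in assoc adj [set z; w] [set c; d] -> x != y -> [disjoint x & y]) ->
  connect G' z c.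
Proof.
move=> acd ncd nA c2 dis.
case: (boolP (connect G' z c)) => // nz.
set A := assoc adj [set z; w] [set c; d] in nA c2 dis.
set S := [set [set w; c]; [set w; d]].
have AS : A \subset S.
  apply/fintype.subsetP => g gA.
  by case: (key _ _ _ _ _ gA acd ncd (nA g gA)) => //; rewrite (negbTE nz).
have cS : (#|S| <= 2)%N by rewrite cards2; case: (_ != _).
have cA := subset_leq_card AS.
have eAS : #|A| = #|S| by apply/eqP; rewrite eqn_leq cA /=; exact: leq_trans c2.
have AeS := (subset_cardP eAS AS).
have c2' : #|A| = 2%N by apply/eqP; rewrite eqn_leq c2 andbT; exact: leq_trans cS.
have neq : [set w; c] != [set w; d].
  by move: c2'; rewrite eAS cards2; case: (_ != _).
have h1 : [set w; c] \in A by rewrite AeS !inE eqxx.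
have h2 : [set w; d] \in A by rewrite AeS !inE eqxx orbT.
have := dis c2' _ _ h1 h2 neq.
by move/disjointFl => /(_ w); rewrite !inE eqxx => /(_ isT).
Qed.

End Aux.

Theorem lemma8 (R : realType) (T : finType) (adj : rel T)
    (pos : T -> R * R) (arc : {set T} -> R -> R * R) (Rm : {set {set T}}) :
  symmetric adj -> irreflexive adj ->
  good_drawing adj pos arc -> one_planar adj arc ->
  type2A adj arc -> nice adj arc ->
  removal_set adj arc Rm ->
  connected_graph adj ->
  connected_graph (delete_edges adj Rm) /\
  subrel (delete_edges adj Rm) adj /\
  planar R (delete_edges adj Rm).
Proof.
move=> adjS adjI gd op t2 nc [rs1 rs2] cg.
split; last split.
- move=> u v; apply: (connect_sub _ (cg u v)) => x y axy.
  case: (boolP ([set x; y] \in Rm)) => hin; last exact: G'edge.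
  have [f cef] := rs1 _ hin.
  have nf : f \notin Rm by move: (rs2 _ _ cef); rewrite hin.
  have [_ [fe _]] := cef.
  move: fe => /existsP[c /existsP[d /andP[acd /eqP fE]]].
  subst f.
  have nA : forall z w, [set x; y] = [set z; w] ->
      forall g, g \in assoc adj [set z; w] [set c; d] -> g \notin Rm.
    move=> z w E g gA; rewrite -E in gA.
    apply/negP => /rs1 [h cgh].
    exact: (nc _ _ cef g gA h cgh).
  have [t2a t2b] := t2 _ _ cef.
  have cx : connect (delete_edges adj Rm) x c.
    exact: (@side _ _ Rm adjS adjI _ _ _ _ acd nf (nA x y erefl) t2a t2b).
  have cy : connect (delete_edges adj Rm) y c.
    have E : [set x; y] = [set y; x] by rewrite finset.setUC.
    rewrite E in t2a t2b.
    exact: (@side _ _ Rm adjS adjI _ _ _ _ acd nf (nA y x E) t2a t2b).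
  apply: connect_trans cx _.
  by rewrite (sym_connect_sym (@G'S _ _ Rm adjS)).
- by move=> u v /andP[].
- exists pos, arc; split.
    have [[inj dr] _] := gd.
    split => // e /edgeG' [he _]; exact: dr.
  move=> e f [/edgeG' [he ne] [/edgeG' [hf nf] [nef pts]]].
  have := rs2 e f (conj he (conj hf (conj nef pts))).
  by rewrite (negbTE ne) (negbTE nf).
Qed.
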